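(* Let $\mu$ be a finite Borel measure on $\mathbb{R}^d$ and suppose there exists a frame measure $\nu$ for $\mu$ with frame bounds $A,B>0$. Assume in addition that there exist a Borel set $F\subset\mathbb{R}^d$ with $\mu(F)>0$ and a vector $a\in\mathbb{R}^d$ such that $T_a(\mu|_{F+a})\ll\mu$. Then $$\frac{B}{A}\geq\left\|\frac{dT_a(\mu|_{F+a})}{d\mu}\right\|_{L^\infty(\mu)}.$$
   Context: For $t,x\in\mathbb{R}^d$ let $e_t(x)=e^{2\pi i t\cdot x}$. For a finite Borel measure $\mu$ and $f\in L^1(\mu)$, $\widehat{f\,d\mu}(t)=\int f(x)e^{-2\pi i t\cdot x}\,d\mu(x)$. A Borel measure $\nu$ on $\mathbb{R}^d$ is a frame measure for $\mu$ with frame bounds $A,B>0$ if $A\|f\|_{L^2(\mu)}^2\le \|\widehat{f\,d\mu}\|_{L^2(\nu)}^2\le B\|f\|_{L^2(\mu)}^2$ for all $f\in L^2(\mu)$; it is a tight frame measure if one can take $A=B$. For a Borel set $E$, $\mu|_E(G):=\mu(E\cap G)$; for $a\in\mathbb{R}^d$, $T_a\mu(G):=\mu(G+a)$ for Borel $G$ (so $\int f\,dT_a\mu=\int f(x-a)\,d\mu(x)$). $\frac{d\omega}{d\mu}$ denotes the Radon–Nikodym derivative and $\|\cdot\|_{L^\infty(\mu)}$ the $\mu$-essential supremum. *)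

(* Defs.v *)
From HB Require Import structures.
From mathcomp Require Import all_boot all_order all_algebra.
From mathcomp Require Import all_classical all_reals all_analysis.
From mathcomp Require Import complex.
From mathcomp Require Import ess_sup_inf.

Set Implicit Arguments.
Unset Strict Implicit.
Unset Printing Implicit Defensive.

Import Order.TTheory GRing.Theory Num.Theory.
Import numFieldNormedType.Exports.

Local Open Scope classical_set_scope.
Local Open Scope ring_scope.
Local Open Scope complex_scope.

(* R^d : row vectors of length d, equipped with the Borel sigma-algebra,
   i.e. the sigma-algebra generated by the open sets of the (Euclidean,
   product) topology of 'rV[R]_d. *)
Definition Rd (R : realType) (d : nat) : Type :=
  g_sigma_algebraType (@open ('rV[R]_d)).

Definition dotRd (R : realType) (d : nat) (t x : 'rV[R]_d) : R :=
  \sum_(i < d) t 0 i * x 0 i.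

Definition cexpi (R : realType) (theta : R) : R[i] := (cos theta) +i* (sin theta).

Definition cnorm2 (R : realType) (z : R[i]) : R := complex.Re z ^+ 2 + complex.Im z ^+ 2.

Definition cintegral (R : realType) (d : nat)
  (mu : {measure set (Rd R d) -> \bar R}) (g : Rd R d -> R[i]) : R[i] :=
  (Rintegral mu setT (fun x => complex.Re (g x))) +i* (Rintegral mu setT (fun x => complex.Im (g x))).

Definition fourier_meas (R : realType) (d : nat)
  (mu : {measure set (Rd R d) -> \bar R}) (f : Rd R d -> R[i]) (t : 'rV[R]_d) : R[i] :=
  cintegral mu (fun x => f x * cexpi (- (2 * pi * dotRd t x))).

Definition L2 (R : realType) (d : nat)
  (mu : {measure set (Rd R d) -> \bar R}) (f : Rd R d -> R[i]) : Prop :=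
  measurable_fun setT (fun x => complex.Re (f x)) /\
  measurable_fun setT (fun x => complex.Im (f x)) /\
  (\int[mu]_x (cnorm2 (f x))%:E < +oo)%E.

Definition L2norm2 (R : realType) (d : nat)
  (mu : {measure set (Rd R d) -> \bar R}) (f : Rd R d -> R[i]) : \bar R :=
  (\int[mu]_x (cnorm2 (f x))%:E)%E.

Definition frame_measure (R : realType) (d : nat)
  (mu nu : {measure set (Rd R d) -> \bar R}) (A B : R) : Prop :=
  0 < A /\ 0 < B /\
  forall f : Rd R d -> R[i], L2 mu f ->
    (A%:E * L2norm2 mu f <= \int[nu]_t (cnorm2 (fourier_meas mu f t))%:E)%E /\
    (\int[nu]_t (cnorm2 (fourier_meas mu f t))%:E <= B%:E * L2norm2 mu f)%E.

Definition shift_set (R : realType) (d : nat) (G : set (Rd R d)) (a : 'rV[R]_d)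
  : set (Rd R d) := [set (x : 'rV[R]_d) + a | x in G].

Definition meas_restrict (R : realType) (d : nat) (m : set (Rd R d) -> \bar R)
  (E : set (Rd R d)) : set (Rd R d) -> \bar R := fun G => m (E `&` G).

Definition meas_translate (R : realType) (d : nat) (a : 'rV[R]_d)
  (m : set (Rd R d) -> \bar R) : set (Rd R d) -> \bar R :=
  fun G => m (shift_set G a).

(* Main.v *)
Require Import Defs.
From HB Require Import structures.
From mathcomp Require Import all_boot all_order all_algebra.
From mathcomp Require Import all_classical all_reals all_analysis.
From mathcomp Require Import complex.
From mathcomp Require Import ess_sup_inf measurable_realfun.
From mathcomp Require Import ring lra.

Import Order.TTheory GRing.Theory Num.Theory.
Import numFieldNormedType.Exports.

Local Open Scope classical_set_scope.
Local Open Scope ring_scope.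

Section A.
Context (R : realType) (d : nat).
Local Notation T := (Rd R d).

Lemma Rd_open_meas (U : set 'rV[R]_d) : open U -> measurable (U : set T).
Proof. by move=> oU; apply: sub_sigma_algebra. Qed.

Lemma cont_meas_R (f : 'rV[R]_d -> R) : continuous f ->
  measurable_fun (setT : set T) (f : T -> R).
Proof.
move=> /continuousP cf; apply: (measurability _ (RGenOpens.measurableE R)).
move=> _ [_ [a [b ->] <-]]; rewrite setTI; apply: Rd_open_meas.
exact/cf/interval_open.
Qed.

Lemma cont_meas_Rd (f : 'rV[R]_d -> 'rV[R]_d) : continuous f ->
  measurable_fun (setT : set T) (f : T -> T).
Proof.
move=> /continuousP cf; apply: (@measurability _ _ _ _ setT (f : T -> T) (@open 'rV[R]_d)).
  by [].
move=> X [U oU] <-; rewrite setTI; apply: Rd_open_meas; exact: cf.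
Qed.
End A.

Section B.
Context (R : realType) (d : nat).
Local Notation T := (Rd R d).
Local Open Scope ereal_scope.

Definition sh (a : 'rV[R]_d) (x : T) : T := ((x : 'rV[R]_d) - a)%R.

Lemma msh a : measurable_fun setT (sh a).
Proof.
apply: (@cont_meas_Rd R d (fun x => x - a)%R) => x.
exact: (@continuousB _ _ _ id (cst a) x (fun U => id) (@cst_continuous _ _ a x)).
Qed.

Lemma shiftE a (G : set T) : shift_set G a = sh a @^-1` G.
Proof.
apply/seteqP; split => x /=.
  by case=> y Gy <-; rewrite /sh addrK.
by move=> Gx; exists (sh a x) => //; rewrite /sh subrK.
Qed.

Variables (mu : {finite_measure set T -> \bar R}) (a : 'rV[R]_d).

Definition Pa := pushforward mu (sh a).

Let Pa0 : Pa set0 = 0.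
Proof. by rewrite /Pa /pushforward preimage_set0 measure0. Qed.

Let Pa_ge0 A : 0 <= Pa A.
Proof. rewrite /Pa /pushforward. exact: (measure_ge0 mu). Qed.

Let Pa_sigma_additive : semi_sigma_additive Pa.
Proof.
move=> F mF tF mUF; rewrite /Pa /pushforward preimage_bigcup.
apply: measure_semi_sigma_additive.
- by move=> n; rewrite -[X in measurable X]setTI; exact: msh.
- apply/trivIsetP => /= i j _ _ ij; rewrite -preimage_setI.
  by move/trivIsetP : tF => /(_ _ _ _ _ ij) ->//; rewrite preimage_set0.
- by rewrite -preimage_bigcup -[X in measurable X]setTI; exact: msh.
Qed.

HB.instance Definition _ := isMeasure.Build _ _ _ Pa Pa0 Pa_ge0 Pa_sigma_additive.

Let Pa_fin : fin_num_fun Pa.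
Proof.
move=> A mA; have := fin_num_measure mu setT measurableT.
rewrite !ge0_fin_numE//.
apply: le_lt_trans; rewrite /Pa /pushforward; apply: le_measure; rewrite ?inE//.
by rewrite -[X in measurable X]setTI; exact: msh.
Qed.

HB.instance Definition _ := Measure_isFinite.Build _ _ _ Pa Pa_fin.

End B.
Arguments sh {R d}.
Arguments Pa {R d}.
Arguments msh {R d}.
Arguments shiftE {R d}.

Section C.
Context (R : realType) (d : nat).
Local Notation T := (Rd R d).
Local Open Scope ereal_scope.

Lemma fin_lty (m : {finite_measure set T -> \bar R}) (A : set T) :
  measurable A -> m A < +oo.
Proof.
move=> mA; have := fin_num_measure m A mA.
by rewrite ge0_fin_numE//; exact: (measure_ge0 m).
Qed.

Lemma bnd_of (f : T -> R) (M : R) (A : set T) :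
  (forall x, (`|f x| <= M)%R) -> [bounded f x | x in A].
Proof.
move=> fM; exists M; split; first exact: num_real.
by move=> N MN y Ay; apply: le_trans (fM y) _; exact: ltW.
Qed.

Variables (mu : {finite_measure set T -> \bar R}) (a : 'rV[R]_d)
  (F : set T) (mF : measurable F) (g : T -> R) (hg : measurable_fun setT g)
  (hdens : forall G : set T, measurable G ->
     meas_translate a (meas_restrict mu (shift_set F a)) G = \int[mu]_(x in G) (g x)%:E).

Let Q := mrestr (Pa mu a) mF.

Let QE G : measurable G -> Q G = \int[mu]_(x in G) (g x)%:E.
Proof.
move=> mG; rewrite -hdens// /Q /mrestr /Pa /pushforward /meas_translate /meas_restrict.
by rewrite !shiftE preimage_setI setIC.
Qed.

Let Qmu : Q `<< mu.
Proof.
apply/null_content_dominatesP => G mG muG; rewrite QE//; apply: null_set_integral => //.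
by apply/measurable_EFinP; exact: measurable_funTS.
Qed.

Lemma CV (E : set T) (mE : measurable E) (EF : E `<=` F) (phi : T -> R) (M : R)
  (mphi : measurable_fun setT phi) (phiM : forall x, (`|phi x| <= M)%R) :
  \int[mu]_(x in E) ((phi x)%:E * (g x)%:E) =
  \int[mu]_(x in sh a @^-1` E) (phi (sh a x))%:E.
Proof.
pose RN := Radon_Nikodym (charge_of_finite_measure Q) mu.
have ae : ae_eq mu E RN (EFin \o g).
  apply: integral_ae_eq => //.
  - apply: (integrableS measurableT) => //; exact: Radon_Nikodym_integrable.
  - by apply/measurable_EFinP; exact: measurable_funTS.
  - move=> G GE mG; rewrite -Radon_Nikodym_integral//.
    exact: QE.
transitivity (\int[mu]_(x in E) ((phi x)%:E * RN x)).
  apply: ae_eq_integral => //.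
  - apply: emeasurable_funM; first by apply/measurable_EFinP; exact: measurable_funTS.
    by apply/measurable_EFinP; exact: measurable_funTS.
  - apply: emeasurable_funM; first by apply/measurable_EFinP; exact: measurable_funTS.
    apply: measurable_funTS; apply: measurable_int; exact: Radon_Nikodym_integrable.
  - exact: ae_eq_sym (ae_eqe_mul2l _ ae).
rewrite (Radon_Nikodym_change_of_variables Qmu) //; last first.
  apply: measurable_bounded_integrable => //.
  - exact: fin_lty.
  - exact: measurable_funTS.
  - exact: bnd_of phiM.
rewrite (eq_measure_integral (Pa mu a)); last first.
  move=> G mG GE; rewrite /Q /=; unfold mrestr, Pa, pushforward.
  by rewrite setIidl //; apply: subset_trans EF.
transitivity (\int[mu]_(x in sh a @^-1` E) ((EFin \o phi) \o sh a) x); last by [].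
rewrite -(integral_pushforward (msh a) (f := EFin \o phi)) //; last 2 first.
- by apply/measurable_EFinP.
- apply: (measurable_bounded_integrable (f := phi \o sh a)).
  + by rewrite -[X in measurable X]setTI; exact: msh.
  + by apply: fin_lty; rewrite -[X in measurable X]setTI; exact: msh.
  + apply: measurable_funTS; apply: measurableT_comp => //; exact: msh.
  + by apply: (bnd_of (phi \o sh a) M) => x; exact: phiM.
Qed.

End C.

Lemma dot_cont (R : realType) d (t : 'rV[R]_d) : continuous (fun y : 'rV[R]_d => dotRd t y).
Proof.
rewrite /dotRd.
suff H : forall s : seq 'I_d, continuous (fun y : 'rV[R]_d => \sum_(i <- s) t 0 i * y 0 i) by exact: H.
elim=> [|i s IH] y.
  under eq_fun do rewrite big_nil. exact: cst_continuous.
under eq_fun do rewrite big_cons.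
have h1 : continuous (fun y : 'rV[R]_d => t 0 i * y 0 i).
  move=> z; exact: (cvgM (cvg_cst (t 0 i)) (@coord_continuous R 1 d 0 i z)).
exact: (cvgD (h1 y) (IH y)).
Qed.

Section D.
Context (R : realType) (d : nat).
Local Notation T := (Rd R d).
Local Open Scope complex_scope.

Definition th (t : 'rV[R]_d) (y : 'rV[R]_d) : R := - (2 * pi * dotRd t y).

Lemma th_cont t : continuous (th t).
Proof.
move=> y; exact: (cvgN (cvgM (cvg_cst (2 * pi)) (@dot_cont R d t y))).
Qed.

Lemma mcos t : measurable_fun (setT : set T) (fun y => cos (th t y)).
Proof.
apply: (@cont_meas_R R d (fun y => cos (th t y))) => y.
exact: (continuous_comp (th_cont t y) (@continuous_cos R _)).
Qed.

Lemma msin t : measurable_fun (setT : set T) (fun y => sin (th t y)).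
Proof.
apply: (@cont_meas_R R d (fun y => sin (th t y))) => y.
exact: (continuous_comp (th_cont t y) (@continuous_sin R _)).
Qed.

Lemma th_sh t a (x : T) : th t x = th t (sh a x) + th t a.
Proof.
rewrite /th /sh /dotRd -opprD -mulrDr; congr (- (_ * _)).
rewrite -big_split /=; apply: eq_bigr => i _.
by rewrite !mxE -mulrDr subrK.
Qed.

Lemma fourier_real (mu : {measure set T -> \bar R}) (u : T -> R) t :
  fourier_meas mu (fun x => (u x) +i* 0) t =
  (Rintegral mu setT (fun x => u x * cos (th t x))) +i*
  (Rintegral mu setT (fun x => u x * sin (th t x))).
Proof.
rewrite /fourier_meas /cintegral /cexpi; congr (_ +i* _); apply: eq_Rintegral => x _ /=.
  by rewrite mul0r subr0.
by rewrite mul0r addr0.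
Qed.

End D.
Arguments th {R d}.
Arguments mcos {R d}.
Arguments msin {R d}.
Arguments th_sh {R d}.
Arguments fourier_real {R d}.

Section E.
Context (R : realType) (d : nat).
Local Notation T := (Rd R d).
Local Open Scope complex_scope.

Variables (mu : {finite_measure set T -> \bar R})
  (nu : {measure set T -> \bar R}) (A B : R)
  (hframe : frame_measure mu nu A B)
  (F : set T) (mF : measurable F) (a : 'rV[R]_d)
  (g : T -> R) (hg : measurable_fun setT g)
  (hdens : forall G : set T, measurable G ->
     meas_translate a (meas_restrict mu (shift_set F a)) G = (\int[mu]_(x in G) (g x)%:E)%E).

Lemma intb (v : T -> R) M (mv : measurable_fun setT v) (vb : forall x, `|v x| <= M)
  (G : set T) (mG : measurable G) : mu.-integrable G (EFin \o v).
Proof.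
apply: measurable_bounded_integrable => //.
- exact: fin_lty.
- exact: measurable_funTS.
- exact: bnd_of vb.
Qed.

Lemma mD (E : set T) : measurable E -> measurable (sh a @^-1` E).
Proof. by move=> mE; rewrite -[X in measurable X]setTI; exact: msh. Qed.

Lemma indic_patch (E : set T) (h : T -> R) x : \1_E x * h x = (h \_ E) x.
Proof.
rewrite indicE /patch; case: ifPn => _; first by rewrite mul1r.
by rewrite mul0r.
Qed.

Lemma CVR (E : set T) (mE : measurable E) (EF : E `<=` F) (phi : T -> R) (M : R)
  (mphi : measurable_fun setT phi) (phiM : forall x, `|phi x| <= M) :
  Rintegral mu setT (fun x => \1_E x * g x * phi x) =
  Rintegral mu (sh a @^-1` E) (fun x => phi (sh a x)).
Proof.
transitivity (Rintegral mu setT ((fun x => phi x * g x) \_ E)).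
  apply: eq_Rintegral => x _; rewrite /patch /= indicE; case: ifP => _.
    by rewrite mul1r mulrC.
  by rewrite !mul0r.
rewrite -Rintegral_mkcond /Rintegral; congr fine.
under eq_integral do rewrite EFinM.
exact: (@CV R d mu a F mF g hg hdens E mE EF phi M mphi phiM).
Qed.

Lemma Dside (E : set T) (mE : measurable E) t :
  Rintegral mu setT (fun x => \1_(sh a @^-1` E) x * cos (th t x)) =
  Rintegral mu (sh a @^-1` E) (fun x => cos (th t (sh a x))) * cos (th t a) -
  Rintegral mu (sh a @^-1` E) (fun x => sin (th t (sh a x))) * sin (th t a) /\
  Rintegral mu setT (fun x => \1_(sh a @^-1` E) x * sin (th t x)) =
  Rintegral mu (sh a @^-1` E) (fun x => sin (th t (sh a x))) * cos (th t a) +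
  Rintegral mu (sh a @^-1` E) (fun x => cos (th t (sh a x))) * sin (th t a).
Proof.
have mDE := @mD E mE.
have ic : mu.-integrable (sh a @^-1` E) (EFin \o (fun x => cos (th t (sh a x)))).
  apply: (intb _ 1) => //; last by move=> x; exact: cos_max.
  exact: measurableT_comp (mcos t) (msh a).
have isn : mu.-integrable (sh a @^-1` E) (EFin \o (fun x => sin (th t (sh a x)))).
  apply: (intb _ 1) => //; last by move=> x; exact: sin_max.
  exact: measurableT_comp (msin t) (msh a).
split.
- transitivity (Rintegral mu (sh a @^-1` E) (fun x => cos (th t (sh a x)) * cos (th t a) - sin (th t (sh a x)) * sin (th t a))).
    rewrite [RHS]Rintegral_mkcond; apply: eq_Rintegral => x _.
    rewrite /patch /= indicE; case: ifP => _; last by rewrite mul0r.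
    by rewrite mul1r (th_sh t a x) cosD.
  rewrite RintegralB //; last 2 first.
  + by apply: (eq_integrable mDE _ _ _ (integrableZr mDE _ ic)) => x _ /=; rewrite EFinM.
  + by apply: (eq_integrable mDE _ _ _ (integrableZr mDE _ isn)) => x _ /=; rewrite EFinM.
  by rewrite !RintegralZr.
- transitivity (Rintegral mu (sh a @^-1` E) (fun x => sin (th t (sh a x)) * cos (th t a) + cos (th t (sh a x)) * sin (th t a))).
    rewrite [RHS]Rintegral_mkcond; apply: eq_Rintegral => x _.
    rewrite /patch /= indicE; case: ifP => _; last by rewrite mul0r.
    by rewrite mul1r (th_sh t a x) sinD.
  rewrite RintegralD //; last 2 first.
  + by apply: (eq_integrable mDE _ _ _ (integrableZr mDE _ isn)) => x _ /=; rewrite EFinM.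
  + by apply: (eq_integrable mDE _ _ _ (integrableZr mDE _ ic)) => x _ /=; rewrite EFinM.
  by rewrite !RintegralZr.
Qed.

Lemma L2_real (u : T -> R) M (mu1 : measurable_fun setT u) (ub : forall x, `|u x| <= M) :
  L2 mu (fun x => u x +i* 0).
Proof.
split; first exact: mu1.
split; first exact: measurable_cst.
have -> : (fun x => (cnorm2 (u x +i* 0))%:E) = EFin \o (fun x => u x ^+ 2).
  by apply: funext => x; rewrite /cnorm2 /= expr0n addr0.
apply: (integrable_lty measurableT); apply: (intb _ (M ^+ 2)) => //.
  exact: measurable_funM.
move=> x; rewrite normrX; have h := ub x; have h0 : 0 <= `|u x| by [].
nra.
Qed.

Lemma key (E : set T) (mE : measurable E) (EF : E `<=` F) (N : R)
  (gN : forall x, E x -> `|g x| <= N) :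
  (A%:E * \int[mu]_(x in E) (g x ^+ 2)%:E <= B%:E * \int[mu]_(x in E) (g x)%:E)%E.
Proof.
have mDE := @mD E mE.
pose u1 x := \1_E x * g x.
pose u2 x : R := \1_(sh a @^-1` E) x.
have mu1 : measurable_fun setT u1 by apply: measurable_funM => //; exact: measurable_indic.
have mu2 : measurable_fun setT u2 by exact: measurable_indic.
have u1b x : `|u1 x| <= Num.max N 0.
  rewrite /u1 indicE; have [xE|xE] := boolP (x \in E).
    by rewrite mul1r le_max gN //; exact: set_mem.
  by rewrite mul0r normr0 le_max lexx orbT.
have u2b x : `|u2 x| <= 1.
  by rewrite /u2 indicE; case: (x \in _); rewrite ?normr1 ?normr0.
have [A0 [B0 hf]] := hframe.
have [h1 _] := hf _ (@L2_real u1 _ mu1 u1b).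
have [_ h2] := hf _ (@L2_real u2 _ mu2 u2b).
have eqF : (\int[nu]_t (cnorm2 (fourier_meas mu (fun x => u1 x +i* 0) t))%:E =
            \int[nu]_t (cnorm2 (fourier_meas mu (fun x => u2 x +i* 0) t))%:E)%E.
  apply: eq_integral => t _; congr EFin.
  rewrite !fourier_real /cnorm2 /=.
  have [-> ->] := Dside E mE t.
  rewrite /u1 (CVR E mE EF _ _ (mcos t) (fun x => cos_max (th t x))).
  rewrite (CVR E mE EF _ _ (msin t) (fun x => sin_max (th t x))).
  set C := Rintegral _ _ _; set S := Rintegral _ _ _.
  have cs := cos2Dsin2 (th t a).
  set c := cos _ in cs *; set s := sin _ in cs *.
  have -> : (C * c - S * s) ^+ 2 + (S * c + C * s) ^+ 2 = (C ^+ 2 + S ^+ 2) * (c ^+ 2 + s ^+ 2) by ring.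
  by rewrite cs mulr1.
have n1 : L2norm2 mu (fun x => u1 x +i* 0) = (\int[mu]_(x in E) (g x ^+ 2)%:E)%E.
  rewrite /L2norm2 [RHS]integral_mkcond; apply: eq_integral => x _.
  rewrite /cnorm2 /= /patch /u1 indicE; case: ifP => _.
    by rewrite mul1r expr0n addr0.
  by rewrite mul0r expr0n addr0.
have n2 : L2norm2 mu (fun x => u2 x +i* 0) = (\int[mu]_(x in E) (g x)%:E)%E.
  rewrite -hdens // /meas_translate /meas_restrict !shiftE.
  rewrite setIidr; last by move=> x /= /EF.
  have := integral_indic mu measurableT mDE; rewrite setIT => <-; rewrite /L2norm2.
  apply: eq_integral => x _; rewrite /cnorm2 /= expr0n addr0 /u2 indicE.
  by case: (x \in _); rewrite ?expr1n ?expr0n.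
rewrite -n1 -n2; apply: le_trans h1 _; rewrite eqF; exact: h2.
Qed.

Lemma bnd_on (f : T -> R) (M : R) (G : set T) :
  (forall x, G x -> `|f x| <= M) -> [bounded f x | x in G].
Proof.
move=> fM; exists M; split; first exact: num_real.
by move=> N MN y Gy; apply: le_trans (fM y Gy) _; exact: ltW.
Qed.

Lemma mg (I : set R) : measurable I -> measurable (g @^-1` I).
Proof. by move=> mI; rewrite -[X in measurable X]setTI; exact: hg. Qed.

Lemma null_of_int (G : set T) (mG : measurable G) (k : R) (k0 : 0 < k)
  (hk : forall x, G x -> k <= g x) (hI : (\int[mu]_(x in G) (g x)%:E <= 0)%E) :
  mu G = 0.
Proof.
have h : (k%:E * mu G <= 0)%E.
  rewrite -integral_cst //; apply: le_trans hI; apply: ge0_le_integral => //.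
  - by move=> x _; rewrite /= lee_fin ltW.
  - by apply/measurable_EFinP; exact: measurable_funTS.
have k0' : (0 < k%:E)%E by rewrite lte_fin.
move: h; rewrite (pmule_rle0 _ k0') => h.
by apply/eqP; rewrite eq_le h (measure_ge0 mu).
Qed.

Lemma offF (G : set T) (mG : measurable G) (GF : G `<=` ~` F) (k : R) (k0 : 0 < k)
  (hk : forall x, G x -> k <= g x) : mu G = 0.
Proof.
apply: (@null_of_int G mG k k0 hk).
rewrite -hdens // /meas_translate /meas_restrict !shiftE -preimage_setI.
have -> : F `&` G = set0.
  by apply/seteqP; split => // x [Fx /GF].
by rewrite preimage_set0 measure0.
Qed.

Lemma inF (E : set T) (mE : measurable E) (EF : E `<=` F) (k N : R) (k0 : 0 < k)
  (hk : forall x, E x -> k <= g x) (hN : forall x, E x -> g x <= N) (kc : B / A < k) :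
  mu E = 0.
Proof.
have [A0 [B0 _]] := hframe.
have gN x : E x -> `|g x| <= N.
  move=> Ex; rewrite ger0_norm ?hN //; apply: le_trans (ltW k0) (hk _ Ex).
have N0 : forall x, E x -> 0 <= N.
  by move=> x Ex; apply: le_trans (gN x Ex); exact: normr_ge0.
have hkey := @key E mE EF N gN.
have i1 : mu.-integrable E (EFin \o g).
  apply: measurable_bounded_integrable => //; first exact: fin_lty.
    exact: measurable_funTS.
  exact: (bnd_on _ _ _ gN).
have i2 : mu.-integrable E (EFin \o (fun x => g x ^+ 2)).
  apply: measurable_bounded_integrable => //; first exact: fin_lty.
    by apply: measurable_funTS; exact: measurable_funM.
  apply: (bnd_on _ (N ^+ 2)) => x Ex; rewrite normrX.
  have := gN x Ex; have : 0 <= `|g x| by []. nra.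
pose I1 := (\int[mu]_(x in E) (g x)%:E)%E.
pose I2 := (\int[mu]_(x in E) (g x ^+ 2)%:E)%E.
have e1 : (fine I1)%:E = I1 := fineK (integrable_fin_num mE i1).
have e2 : (fine I2)%:E = I2 := fineK (integrable_fin_num mE i2).
have hk2 : (k%:E * I1 <= I2)%E.
  rewrite /I1 -integralZl //; apply: ge0_le_integral => //.
  - move=> x Ex; rewrite /= -EFinM lee_fin mulr_ge0 //; first exact: ltW.
    exact: le_trans (ltW k0) (hk _ Ex).
  - apply/measurable_EFinP; apply: measurable_funTS; exact: measurable_funM.
  - apply/measurable_EFinP; apply: measurable_funTS; exact: measurable_funM.
  - move=> x Ex; rewrite /= -EFinM lee_fin expr2; apply: ler_wpM2r; last exact: hk.
    exact: le_trans (ltW k0) (hk _ Ex).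
apply: (@null_of_int E mE k k0 hk); rewrite -/I1 -e1 lee_fin.
move: hkey hk2; rewrite -/I1 -/I2 -e1 -e2 -!EFinM !lee_fin.
set r1 := fine I1; set r2 := fine I2 => hkey hk2.
have hc : B = A * (B / A) by rewrite mulrC divfK // gt_eqF.
have hAk : B < A * k by rewrite hc ltr_pM2l.
rewrite /=; clear hc; nra.
Qed.

Lemma final_in : (ess_sup mu (fun x => (g x)%:E) <= (B / A)%:E)%E.
Proof.
have [A0 [B0 _]] := hframe.
set c := B / A.
have c0 : 0 < c by rewrite divr_gt0.
apply/ess_supP.
pose G0 := ~` F `&` (g @^-1` `]c, +oo[).
pose Ek n m := F `&` (g @^-1` `[c + n.+1%:R^-1, m%:R]).
have mG0 : measurable G0 by apply: measurableI; [exact: measurableC | exact: mg].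
have mEk n m : measurable (Ek n m) by apply: measurableI => //; exact: mg.
have nG0 : mu.-negligible G0.
  exists G0; split => //; apply: (@offF G0 mG0 _ c c0).
    by move=> x [].
  move=> x [_ /=]; rewrite in_itv /= andbT; exact: ltW.
have nEk n m : mu.-negligible (Ek n m).
  exists (Ek n m); split => //; apply: (@inF (Ek n m) (mEk n m) _ (c + n.+1%:R^-1) m%:R).
  - by move=> x [].
  - by rewrite addr_gt0 // invr_gt0.
  - by move=> x [_ /=]; rewrite in_itv /= => /andP[].
  - by move=> x [_ /=]; rewrite in_itv /= => /andP[].
  - by rewrite ltrDl invr_gt0.
apply: (negligibleS _ (negligibleU nG0 (negligible_bigcup (fun n => negligible_bigcup (fun m => nEk n m))))).
move=> x /= hx; have cx : c < g x by rewrite ltNge -lee_fin; apply/negP.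
have [Fx|nFx] := pselect (F x); last first.
  by left; split => //=; rewrite in_itv /= andbT.
right; have [n hn] := ltr_add_invr cx.
exists n => //; exists (Num.Def.archi_bound (g x)) => //; split => //=.
rewrite in_itv /=; apply/andP; split; first exact: ltW.
by apply: ltW; apply: archi_boundP; apply: ltW; apply: lt_trans cx.
Qed.

End E.

Theorem theorem2p2 (R : realType) (d : nat)
  (mu : {finite_measure set (Rd R d) -> \bar R})
  (nu : {measure set (Rd R d) -> \bar R}) (A B : R)
  (hframe : frame_measure mu nu A B)
  (F : set (Rd R d)) (mF : measurable F) (muF : (0 < mu F)%E)
  (a : 'rV[R]_d)
  (hac : null_dominates mu (meas_translate a (meas_restrict mu (shift_set F a))))
  (g : Rd R d -> R)
  (hg : measurable_fun setT g)
  (hgi : mu.-integrable setT (fun x => (g x)%:E))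
  (hdens : forall G : set (Rd R d), measurable G ->
     meas_translate a (meas_restrict mu (shift_set F a)) G = (\int[mu]_(x in G) (g x)%:E)%E) :
  (ess_sup mu (fun x => (g x)%:E) <= (B / A)%:E)%E.
Proof.
exact: (@final_in R d mu nu A B hframe F mF a g hg hdens).
Qed.
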